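(* Let $q$ be a prime power, $m\ge 1$, $1\le k\le n$, let $g_1,\dots,g_n\in\mathbb{F}_{q^m}$ be linearly independent over $\mathbb{F}_q$, let $\mathbf g=(g_1,\dots,g_n)$, let $C$ be the Gabidulin code defined below, and let $\mathbf r\in\mathbb{F}_{q^m}^n$ be a received word. Then Algorithm 1 (described in the context), run on $k,n,\mathbf g,\mathbf r$, returns a list whose elements are exactly the message polynomials $m(x)$ ($m\in\mathcal{L}_q(x,q^m)$, $\mathrm{qdeg}(m)<k$) of all codewords $\mathbf c=(m(g_1),\dots,m(g_n))\in C$ that are closest to $\mathbf r$ in the rank distance, i.e. with $d_R(\mathbf c,\mathbf r)=\min_{\mathbf c'\in C}d_R(\mathbf c',\mathbf r)$.
   Context: Write $[i]:=q^i$. A $q$-linearized polynomial over $\mathbb{F}_{q^m}$ is $f(x)=\sum_{i=0}^{d}a_ix^{[i]}$ with $a_i\in\mathbb{F}_{q^m}$; if $a_d\ne0$ then $d=\mathrm{qdeg}(f)$ is its $q$-degree ($\mathrm{qdeg}(0)=-\infty$), and $f$ is monic if $a_d=1$. The set $\mathcal{L}_q(x,q^m)$ of such polynomials is a (noncommutative) ring under addition and composition $f\circ g=f(g(x))$. For $\mathbb{F}_q$-linearly independent $g_1,\dots,g_n$, $\Pi_{\mathbf g}(x)=\prod_{u\in\langle g_1,\dots,g_n\rangle}(x-u)$ ($\mathbb{F}_q$-linear span) is the $q$-annihilator polynomial; it lies in $\mathcal{L}_q(x,q^m)$ and has $q$-degree $n$. For $\mathbf r=(r_1,\dots,r_n)$,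 the $q$-Lagrange polynomial is $\Lambda_{\mathbf g,\mathbf r}(x)=\sum_{i=1}^n(-1)^{n-i}r_i\det(\mathfrak D_i(\mathbf g,x))/\det(M_n(g_1,\dots,g_n))$, where $M_n(v_1,\dots,v_s)$ is the $n\times s$ matrix with $(j,l)$ entry $v_l^{[j-1]}$ and $\mathfrak D_i(\mathbf g,x)$ is $M_n(g_1,\dots,g_n,x)$ with the $i$-th column removed; it lies in $\mathcal{L}_q(x,q^m)$, has $q$-degree less than $n$ and satisfies $\Lambda_{\mathbf g,\mathbf r}(g_i)=r_i$. The Gabidulin code is $C=\{(m(g_1),\dots,m(g_n)) : m\in\mathcal{L}_q(x,q^m),\ \mathrm{qdeg}(m)<k\}$, $m$ being the message polynomial of the codeword. The rank distance $d_R(\mathbf a,\mathbf b)$ of $\mathbf a,\mathbf b\in\mathbb{F}_{q^m}^n$ is the $\mathbb{F}_q$-rank of the $m\times n$ matrix over $\mathbb{F}_q$ obtained by expanding each coordinate of $\mathbf a-\mathbf b$ in a fixed $\mathbb{F}_q$-basis of $\mathbb{F}_{q^m}$. $\mathcal{L}_q(x,q^m)^2$ is a left module via $h\circ[f_1\ f_2]=[h\circ f_1\ \ h\circ f_2]$. The interpolation module $\mathfrak M(\mathbf r)$ is the set of all $\beta\circ[\Pi_{\mathbf g}(x)\ \ 0]+\gamma\circ[-\Lambda_{\mathbf g,\mathbf r}(x)\ \ x]$ with $\beta,\gamma\in\mathcal{L}_q(x,q^m)$. Monomials are $x^{[i]}e_j$ ($x^{[i]}$ in coordinate $j\in\{1,2\}$).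 The $(0,k-1)$-weighted term-over-position order: with $w_1=0,w_2=k-1$, $x^{[i_1]}e_{j_1}<x^{[i_2]}e_{j_2}$ iff $i_1+w_{j_1}<i_2+w_{j_2}$, or $i_1+w_{j_1}=i_2+w_{j_2}$ and $j_1<j_2$. The leading monomial $\mathrm{lm}(f)$ of a nonzero $f$ is its largest monomial (with nonzero coefficient), the leading term $\mathrm{lt}(f)$ is that monomial with its coefficient, and the leading position $\mathrm{lpos}(f)$ is its coordinate $j$. The weighted $q$-degree of $[f_1\ f_2]$ is $\max\{\mathrm{qdeg}(f_1),\mathrm{qdeg}(f_2)+k-1\}$. A basis of a submodule is a generating set whose elements are linearly independent ($\sum a_i\circ f^{(i)}=0$ with $a_i\in\mathcal{L}_q(x,q^m)$ implies all $a_i=0$). For nonzero $f^{(1)},\dots,f^{(s)}$, $f$ reduces modulo $F=\{f^{(1)},\dots,f^{(s)}\}$ in one step if $h=f-\sum_{i}(b_ix^{[a_i]})\circ f^{(i)}$ (sum over some of the $f^{(i)}$) with $\mathrm{lm}(f)=x^{[a_i]}\circ\mathrm{lm}(f^{(i)})$ for each such $i$ and $\mathrm{lt}(f)=\sum_i(b_ix^{[a_i]})\circ\mathrm{lt}(f^{(i)})$; $f$ is minimal w.r.t. $F$ if it cannot be so reduced. A basis $B$ is minimal if each $b\in B$ is minimal w.r.t. $B\setminus\{b\}$. Algorithm 1 (input $k,n,\mathbf g,\mathbf r$): (1) compute $\Pi_{\mathbf g},\Lambda_{\mathbf g,\mathbf r}$ and form $\mathfrak M(\mathbf r)$; (2)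 compute a minimal basis $\{b^{(1)},b^{(2)}\}$ of $\mathfrak M(\mathbf r)$ w.r.t. the $(0,k-1)$-weighted term-over-position order with $\mathrm{lpos}(b^{(1)})=1$, $\mathrm{lpos}(b^{(2)})=2$; (3) let $\ell_1,\ell_2$ be the weighted $q$-degrees of $b^{(1)},b^{(2)}$; (4) set list $:=$ empty, $j:=0$; while list is empty: for every $\beta\in\mathcal{L}_q(x,q^m)$ with $\mathrm{qdeg}(\beta)\le\ell_2-\ell_1+j$ and every monic $\gamma\in\mathcal{L}_q(x,q^m)$ with $\mathrm{qdeg}(\gamma)=j$, put $f=[f_1\ f_2]:=\beta\circ b^{(1)}+\gamma\circ b^{(2)}$, and if there is $m\in\mathcal{L}_q(x,q^m)$ with $f_1(x)=-f_2(m(x))$, add $m$ to the list; then $j:=j+1$. Return the list. *)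

(* Defs.v *)
From HB Require Import structures.
From mathcomp Require Import all_boot all_order all_algebra all_field.
Set Implicit Arguments. Unset Strict Implicit. Unset Printing Implicit Defensive.
Import Order.TTheory GRing.Theory Num.Theory.
Local Open Scope ring_scope.

(* F = F_q (q = #|F|, automatically a prime power),
   L = F_{q^m} as a finite-dimensional field extension of F (m = \dim {:L}). *)
Section Gabidulin.
Variables (F : finFieldType) (L : fieldExtType F).

Definition qq : nat := #|F|.

Definition qpow (i : nat) : nat := (qq ^ i)%N.

(* q-linearized polynomials: polynomials in {poly L} whose only nonzero
   coefficients are at exponents q^i.  The coefficient a_i of x^[i] is p`_(q^i). *)
Definition islin (p : {poly L}) : Prop :=
  forall e : nat, p`_e != 0 -> exists i : nat, e = qpow i.

Definition qcoef_nz (p : {poly L}) (i : nat) : bool := p`_(qpow i) != 0.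

(* q-degree: None stands for -infinity (zero polynomial). *)
Definition qdeg (p : {poly L}) : option nat :=
  if p == 0 then None
  else Some (\max_(i < size p | qcoef_nz p i) (i : nat))%N.

Definition qdeg_le (p : {poly L}) (d : int) : Prop :=
  match qdeg p with None => True | Some e => (e%:Z <= d)%R end.

Definition qdeg_lt (p : {poly L}) (d : nat) : Prop :=
  match qdeg p with None => True | Some e => (e < d)%N end.

Definition qmonic (p : {poly L}) : Prop :=
  exists d, qdeg p = Some d /\ p`_(qpow d) = 1.

(* Elements of L_q(x,q^m)^2, with the left action h o [f1 f2] = [h o f1  h o f2]. *)
Definition pair := ({poly L} * {poly L})%type.

Definition islin2 (f : pair) : Prop := islin f.1 /\ islin f.2.

Definition lact (h : {poly L}) (f : pair) : pair := (h \Po f.1, h \Po f.2).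

Definition padd (f g : pair) : pair := (f.1 + g.1, f.2 + g.2).

(* q-annihilator polynomial of the F-span of g_1..g_n (g independent, so each
   element of the span is  \sum_i c_i g_i  for exactly one c). *)
Definition Pi_g (n : nat) (g : 'I_n -> L) : {poly L} :=
  \prod_(c : {ffun 'I_n -> F}) ('X - (\sum_(i < n) c i *: g i)%:P).

(* Moore matrix M_n(v_1..v_s), 0-indexed: (j,l) entry v_l^[j]. *)
Definition moore (n s : nat) (v : 'I_s -> L) : 'M[L]_(n, s) :=
  \matrix_(j < n, l < s) v l ^+ qpow j.

(* M_n(g_1,...,g_n,x) with entries in {poly L}. *)
Definition moore_x (n : nat) (g : 'I_n -> L) : 'M[{poly L}]_(n, n.+1) :=
  \matrix_(j < n, l < n.+1)
     (if @insub nat (fun x => (x < n)%N) 'I_n (val l) is Some l'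
      then (g l' ^+ qpow j)%:P else 'X^(qpow j)).

(* q-Lagrange polynomial; with 0-indexed i, (-1)^(n-(i+1)). *)
Definition Lambda (n : nat) (g r : 'I_n -> L) : {poly L} :=
  \sum_(i < n)
     ((-1) ^+ (n - i.+1) * r i / \det (moore n g))%:P
       * \det (col' (widen_ord (leqnSn n) i) (moore_x g)).

Definition inM (n : nat) (g r : 'I_n -> L) (f : pair) : Prop :=
  exists beta gamma : {poly L}, islin beta /\ islin gamma /\
    f = padd (lact beta (Pi_g g, 0)) (lact gamma (- Lambda g r, 'X)).

Section Order.
Variable k : nat.

(* positions are 1 and 2 *)
Definition wt (j : nat) : nat := if j == 1%N then 0%N else (k - 1)%N.

Definition pcomp (f : pair) (j : nat) : {poly L} := if j == 1%N then f.1 else f.2.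

Definition coefm (f : pair) (i j : nat) : L := (pcomp f j)`_(qpow i).

(* (0,k-1)-weighted term-over-position order: (i1,j1) < (i2,j2) *)
Definition mono_lt (i1 j1 i2 j2 : nat) : bool :=
  ((i1 + wt j1 < i2 + wt j2)%N) ||
  ((i1 + wt j1 == i2 + wt j2)%N && (j1 < j2)%N).

Definition is_lt (f : pair) (i j : nat) (c : L) : Prop :=
  (j == 1%N \/ j == 2%N) /\ c != 0 /\ coefm f i j = c /\
  forall i' j', (j' == 1%N \/ j' == 2%N) -> coefm f i' j' != 0 ->
     (i' = i /\ j' = j) \/ mono_lt i' j' i j.

Definition lpos (f : pair) (j : nat) : Prop := exists i c, is_lt f i j c.

Definition term (c : L) (i j : nat) : pair :=
  if j == 1%N then (c *: 'X^(qpow i), 0) else (0, c *: 'X^(qpow i)).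

(* f reduces in one step modulo the one-element set {g} *)
Definition reduces1 (f g : pair) : Prop :=
  exists i j c i' j' c' (a : nat) (b : L),
    is_lt f i j c /\ is_lt g i' j' c' /\
    term 1 i j = lact ('X^(qpow a)) (term 1 i' j') /\
    term c i j = lact (b *: 'X^(qpow a)) (term c' i' j').

Definition wdeg (f : pair) : option nat :=
  match qdeg f.1, qdeg f.2 with
  | None, None => None
  | Some a, None => Some a
  | None, Some b => Some (b + (k - 1))%N
  | Some a, Some b => Some (maxn a (b + (k - 1)))
  end.

Definition minimal_basis (n : nat) (g r : 'I_n -> L) (b1 b2 : pair) : Prop :=
  (* generating set of M(r) (in particular b1, b2 lie in M(r)) *)
  (forall f, inM g r f <->
     exists beta gamma, islin beta /\ islin gamma /\
       f = padd (lact beta b1) (lact gamma b2)) /\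
  (forall beta gamma, islin beta -> islin gamma ->
     padd (lact beta b1) (lact gamma b2) = (0, 0) -> beta = 0 /\ gamma = 0) /\
  b1 <> b2 /\ ~ reduces1 b1 b2 /\ ~ reduces1 b2 b1.

(* m is added to the list in iteration j of step (4) of Algorithm 1 *)
Definition alg_step (b1 b2 : pair) (l1 l2 j : nat) (m : {poly L}) : Prop :=
  islin m /\
  exists beta gamma, islin beta /\ qdeg_le beta (l2%:Z - l1%:Z + j%:Z) /\
    islin gamma /\ qmonic gamma /\ qdeg gamma = Some j /\
    let f := padd (lact beta b1) (lact gamma b2) in
    f.1 = - (f.2 \Po m).

End Order.

(* rank distance: F-rank of the (\dim L) x n expansion matrix in a fixed basis *)
Definition rank_dist (n : nat) (a b : 'I_n -> L) : nat :=
  \rank (\matrix_(i < \dim {: L}, j < n) coord (vbasis fullv) i (a j - b j)).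

Definition codeword (n : nat) (g : 'I_n -> L) (m : {poly L}) : 'I_n -> L :=
  fun i => m.[g i].

Definition closest_msg (n k : nat) (g r : 'I_n -> L) (m : {poly L}) : Prop :=
  islin m /\ qdeg_lt m k /\
  forall m', islin m' -> qdeg_lt m' k ->
    (rank_dist (codeword g m) r <= rank_dist (codeword g m') r)%N.

End Gabidulin.

(* Main.v *)
Require Import Defs.
From HB Require Import structures.
From mathcomp Require Import all_boot all_order all_algebra all_field all_fingroup all_solvable.
From mathcomp Require Import ring zify.
From Stdlib Require Import Classical_Prop.
Set Implicit Arguments. Unset Strict Implicit. Unset Printing Implicit Defensive.
Import Order.TTheory GRing.Theory Num.Theory.
Local Open Scope ring_scope.

Section G.
Variables (F : finFieldType) (L : fieldExtType F).
Local Notation q := (qq F).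
Local Notation qp := (qpow F).

Lemma q_gt1 : (1 < q)%N. Proof. exact: finNzRing_gt1. Qed.
Lemma qp_gt0 i : (0 < qp i)%N.
Proof. by rewrite /qpow expn_gt0 ltnW // q_gt1. Qed.
Lemma qpD a b : qp (a + b) = (qp a * qp b)%N.
Proof. by rewrite /qpow expnD. Qed.
Lemma ltn_qp a b : (qp a < qp b)%N = (a < b)%N.
Proof. by rewrite /qpow ltn_exp2l // q_gt1. Qed.
Lemma leq_qp a b : (qp a <= qp b)%N = (a <= b)%N.
Proof. by rewrite /qpow leq_exp2l // q_gt1. Qed.
Lemma qp_inj : injective qp.
Proof. by move=> a b /eqP; rewrite eqn_leq !leq_qp -eqn_leq => /eqP. Qed.
Lemma qp_self i : (i < qp i)%N.
Proof. by rewrite /qpow ltn_expl // q_gt1. Qed.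
Lemma qp0 : qp 0 = 1%N. Proof. by []. Qed.

Lemma qnat : [pchar F].-nat q.
Proof.
have [p pr ch] := finPcharP F.
have := abelem_pgroup (fin_ring_pchar_abelem ch).
rewrite pgroupE cardsT => pn.
apply: sub_in_pnat pn => x _; rewrite inE => /eqP ->; exact: ch.
Qed.

Lemma exprD_q (R : comNzRingType) :
  (forall p, p \in [pchar F] -> p \in [pchar R]) ->
  forall (x y : R) i, (x + y) ^+ qp i = x ^+ qp i + y ^+ qp i.
Proof.
move=> hR x y i; apply: exprDn_pchar.
have h : [pchar F].-nat (qp i) by rewrite /qpow pnatX qnat.
by apply: sub_in_pnat h => p _; apply: hR.
Qed.

Lemma pcharL p : p \in [pchar F] -> p \in [pchar L].
Proof. by rewrite (pchar_lalg L). Qed.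
Lemma pcharPL p : p \in [pchar F] -> p \in [pchar {poly L}].
Proof. by rewrite pchar_poly => /pcharL. Qed.

Lemma exprDL (x y : L) i : (x + y) ^+ qp i = x ^+ qp i + y ^+ qp i.
Proof. exact: exprD_q pcharL x y i. Qed.
Lemma exprDP (x y : {poly L}) i : (x + y) ^+ qp i = x ^+ qp i + y ^+ qp i.
Proof. exact: exprD_q pcharPL x y i. Qed.

Lemma expF_q (c : F) i : c ^+ qp i = c.
Proof.
elim: i => [|i IH]; first by rewrite expr1.
by rewrite /qpow expnSr exprM -/(qpow F i) IH expf_card.
Qed.


Implicit Types (p u P h : {poly L}) (s : seq L) (v w x : L).

Definition linP (a : nat -> L) (N : nat) : {poly L} :=
  \sum_(i < N) a i *: 'X^(qp i).

Lemma coef_linP a N e :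
  (linP a N)`_e = \sum_(i < N) a i * (e == qp i)%:R.
Proof. by rewrite /linP coef_sum; apply: eq_bigr => i _; rewrite coefZ coefXn. Qed.

Lemma coef_linP_qp a N j : (j < N)%N -> (linP a N)`_(qp j) = a j.
Proof.
move=> jN; rewrite coef_linP (bigD1 (Ordinal jN)) //= eqxx mulr1 big1 ?addr0 //.
move=> i /eqP ne; rewrite (_ : (qp j == qp i) = false) ?mulr0 //.
apply/negP => /eqP /qp_inj E; apply: ne; apply: val_inj; by rewrite /= E.
Qed.

Lemma islin_linP a N : islin (linP a N).
Proof.
move=> e; rewrite coef_linP => nz.
case: (boolP [exists i : 'I_N, a i * (e == qp i)%:R != 0]) => [/existsP[i H]|/existsPn H].
  by move: H; case: (e =P qp i) => [-> _ | _]; [exists i | rewrite mulr0 eqxx].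
by rewrite big1 ?eqxx // in nz => i _; apply/eqP; have := H i; rewrite negbK.
Qed.

Lemma islin_linE p : islin p -> p = linP (fun i => p`_(qp i)) (size p).
Proof.
move=> lp; apply/polyP => e; rewrite coef_linP.
have [z|nz] := eqVneq p`_e 0.
  rewrite z; symmetry; apply: big1 => i _.
  by case: eqP => [<-|_]; rewrite ?z ?mul0r ?mulr0.
have [i ei] := lp e nz.
have iN : (i < size p)%N.
  apply: leq_trans (qp_self i) _; rewrite -ei.
  by rewrite leqNgt; apply/negP => H; move: nz; rewrite nth_default ?eqxx // ltnW.
rewrite (bigD1 (Ordinal iN)) //= -ei eqxx mulr1 big1 ?addr0 //.
move=> j /eqP ne; rewrite (_ : (e == qp j) = false) ?mulr0 //.
apply/negP => /eqP; rewrite ei => /qp_inj E; apply: ne; apply: val_inj; by rewrite /= E.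
Qed.

Lemma islinP p : islin p <-> exists a N, p = linP a N.
Proof.
split=> [lp|[a [N ->]]]; last exact: islin_linP.
by exists (fun i => p`_(qp i)), (size p); apply: islin_linE.
Qed.

Lemma islin0 : islin (0 : {poly L}).
Proof. by move=> e; rewrite coef0 eqxx. Qed.

Lemma islinD p u : islin p -> islin u -> islin (p + u).
Proof.
move=> lp lu e; rewrite coefD => nz.
have [z|nz1] := eqVneq p`_e 0; last exact: lp.
by apply: lu; rewrite z add0r in nz.
Qed.

Lemma islinZ c p : islin p -> islin (c *: p).
Proof. by move=> lp e; rewrite coefZ mulf_eq0 negb_or => /andP[_ /lp]. Qed.

Lemma islinN p : islin p -> islin (- p).
Proof. by move=> lp; rewrite -scaleN1r; apply: islinZ. Qed.

Lemma islinB p u : islin p -> islin u -> islin (p - u).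
Proof. by move=> lp lu; apply: islinD lp (islinN lu). Qed.

Lemma islin_sum (I : Type) (r : seq I) (P : pred I) (f : I -> {poly L}) :
  (forall i, P i -> islin (f i)) -> islin (\sum_(i <- r | P i) f i).
Proof.
move=> H; elim/big_rec: _ => [|i x Pi lx]; first exact: islin0.
exact: islinD (H _ Pi) lx.
Qed.

Lemma islinXq i : islin ('X^(qp i) : {poly L}).
Proof. by move=> e; rewrite coefXn; case: (e =P qp i) => [->|]; [exists i | rewrite eqxx]. Qed.

Lemma islinX : islin ('X : {poly L}).
Proof. by have := @islinXq 0; rewrite /qpow expn0 expr1. Qed.

Lemma islin_coef0 p : islin p -> p`_0 = 0.
Proof.
move=> lp; apply/eqP; apply/negPn/negP => /lp [i] E.
by have := qp_gt0 i; rewrite -E.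
Qed.

Lemma horner_linP a N x : (linP a N).[x] = \sum_(i < N) a i * x ^+ qp i.
Proof.
rewrite /linP horner_sum; apply: eq_bigr => i _.
by rewrite hornerZ hornerXn.
Qed.

Lemma lin_hornerD p x y : islin p -> p.[x + y] = p.[x] + p.[y].
Proof.
move=> /islinP[a [N ->]]; rewrite !horner_linP -big_split /=.
by apply: eq_bigr => i _; rewrite exprDL mulrDr.
Qed.

Lemma lin_horner0 p : islin p -> p.[0] = 0.
Proof.
move=> lp; have H := lin_hornerD 0 0 lp; rewrite addr0 in H.
by apply: (@addrI _ p.[0]); rewrite addr0 -H.
Qed.

Lemma lin_hornerN p x : islin p -> p.[- x] = - p.[x].
Proof.
move=> lp; apply/eqP; rewrite -subr_eq0 opprK -lin_hornerD // addNr.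
by rewrite lin_horner0.
Qed.

Lemma lin_hornerB p x y : islin p -> p.[x - y] = p.[x] - p.[y].
Proof. by move=> lp; rewrite lin_hornerD // lin_hornerN. Qed.

Lemma lin_hornerZ p (c : F) x : islin p -> p.[c *: x] = c *: p.[x].
Proof.
move=> /islinP[a [N ->]]; rewrite !horner_linP scaler_sumr.
apply: eq_bigr => i _; rewrite exprZn expF_q; by rewrite scalerAr.
Qed.

Lemma lin_horner_sum p (I : Type) (r : seq I) (P : pred I) (f : I -> L) :
  islin p -> p.[\sum_(i <- r | P i) f i] = \sum_(i <- r | P i) p.[f i].
Proof.
move=> lp; elim/big_rec2: _ => [|i y z Pi IH]; first exact: lin_horner0.
by rewrite lin_hornerD // IH.
Qed.

Lemma comp_linP a N u : linP a N \Po u = \sum_(i < N) a i *: u ^+ qp i.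
Proof.
rewrite /linP; elim/big_rec2: _ => [|i y z _ <-]; first by rewrite comp_poly0.
by rewrite comp_polyD comp_polyZ comp_Xn_poly.
Qed.

Lemma lin_compD p u (v : {poly L}) : islin p -> p \Po (u + v) = (p \Po u) + (p \Po v).
Proof.
move=> /islinP[a [N ->]]; rewrite !comp_linP -big_split /=.
by apply: eq_bigr => i _; rewrite exprDP scalerDr.
Qed.

Lemma lin_comp0 p : islin p -> p \Po 0 = 0.
Proof. by move=> lp; rewrite comp_poly0r islin_coef0. Qed.

Lemma lin_compN p u : islin p -> p \Po (- u) = - (p \Po u).
Proof.
move=> lp; apply/eqP; rewrite -subr_eq0 opprK -lin_compD // addNr.
by rewrite lin_comp0.
Qed.

Lemma lin_compB p u (v : {poly L}) : islin p -> p \Po (u - v) = (p \Po u) - (p \Po v).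
Proof. by move=> lp; rewrite lin_compD // lin_compN. Qed.

Lemma expq_sum (I : Type) (r : seq I) (f : I -> {poly L}) j :
  (\sum_(i <- r) f i) ^+ qp j = \sum_(i <- r) f i ^+ qp j.
Proof.
elim/big_rec2: _ => [|i y z _ <-]; first by rewrite expr0n; case: eqP => // E; have := qp_gt0 j; rewrite E.
by rewrite exprDP.
Qed.

Lemma islin_expq u j : islin u -> islin (u ^+ qp j).
Proof.
move=> /islinP[a [N ->]]; rewrite /linP expq_sum; apply: islin_sum => i _.
by rewrite exprZn -exprM -qpD; apply: islinZ; apply: islinXq.
Qed.

Lemma islin_comp p u : islin p -> islin u -> islin (p \Po u).
Proof.
move=> /islinP[a [N ->]] lu; rewrite comp_linP; apply: islin_sum => i _.
by apply: islinZ; apply: islin_expq.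
Qed.

Lemma islinC0 (c : L) : islin c%:P -> c = 0.
Proof. by move=> /islin_coef0; rewrite coefC eqxx. Qed.


Lemma lin_size p : islin p -> p != 0 -> exists d, size p = (qp d).+1.
Proof.
move=> lp nz; have := nz; rewrite -lead_coef_eq0 lead_coefE => /lp [d E].
by exists d; rewrite -E polySpred.
Qed.

Lemma qdeg_lin p d : size p = (qp d).+1 -> qdeg p = Some d.
Proof.
move=> sp; have nz : p != 0 by rewrite -size_poly_gt0 sp.
rewrite /qdeg (negPf nz); congr Some.
have dN : (d < size p)%N by rewrite sp ltnS ltnW // qp_self.
have cd : qcoef_nz p (Ordinal dN).
  by rewrite /qcoef_nz /= -[qp d]/((qp d).+1.-1) -sp -lead_coefE lead_coef_eq0.
apply/eqP; rewrite eqn_leq; apply/andP; split.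
  apply/bigmax_leqP => i ci; rewrite -leq_qp -ltnS -sp.
  by rewrite ltnNge; apply/negP => H; move: ci; rewrite /qcoef_nz nth_default ?eqxx.
exact: (@leq_bigmax_cond _ _ (fun i : 'I_(size p) => val i) (Ordinal dN)).
Qed.

Lemma qdeg0 : qdeg (0 : {poly L}) = None.
Proof. by rewrite /qdeg eqxx. Qed.

Lemma qdeg_size p d : islin p -> qdeg p = Some d -> size p = (qp d).+1.
Proof.
move=> lp; have [->|nz] := eqVneq p 0; first by rewrite qdeg0.
have [d' sd] := lin_size lp nz; rewrite (qdeg_lin sd); by case=> <-.
Qed.

Lemma size_lin_gt1 p : islin p -> p != 0 -> (1 < size p)%N.
Proof. by move=> lp nz; have [d ->] := lin_size lp nz; rewrite ltnS qp_gt0. Qed.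

Lemma size_lin_comp p u a b :
  size p = (qp a).+1 -> size u = (qp b).+1 -> size (p \Po u) = (qp (a + b)).+1.
Proof.
move=> sp su; have nz : p \Po u != 0.
  rewrite comp_poly_eq0 ?su ?ltnS ?qp_gt0 // -size_poly_gt0 sp //.
by rewrite polySpred // size_comp_poly sp su /= qpD.
Qed.

Lemma lead_lin_comp p u a :
  size p = (qp a).+1 -> islin u -> u != 0 ->
  lead_coef (p \Po u) = lead_coef p * lead_coef u ^+ qp a.
Proof. by move=> sp lu nz; rewrite lead_coef_comp ?sp // size_lin_gt1. Qed.

Definition combs (s : seq L) : seq L :=
  map (fun c : {ffun 'I_(size s) -> F} => \sum_(i < size s) c i *: s`_i)
    (enum {ffun 'I_(size s) -> F}).

Lemma size_combs s : size (combs s) = (q ^ size s)%N.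
Proof. by rewrite size_map -cardE card_ffun card_ord. Qed.

Lemma uniq_combs s : free s -> uniq (combs s).
Proof.
move=> fs; rewrite map_inj_uniq ?enum_uniq // => c c' E.
have H := elimT (freeP (X:=in_tuple s)) fs; apply/ffunP => i.
suff /(_ i) /eqP : forall i, c i - c' i = 0 by rewrite subr_eq0 => /eqP.
apply: H.
by rewrite (eq_bigr (fun i => c i *: s`_i - c' i *: s`_i)) ?sumrB ?E ?subrr // => j _; rewrite scalerBl.
Qed.

Lemma combs_span s v : v \in combs s -> v \in <<s>>%VS.
Proof.
case/mapP => c _ ->; apply: memv_suml => i _; apply: memvZ.
by apply: memv_span; apply: mem_nth.
Qed.

Lemma count_roots P s : P != 0 -> free s ->
  (forall v, v \in <<s>>%VS -> root P v) -> (q ^ size s < size P)%N.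
Proof.
move=> nz fs kill; rewrite -size_combs; apply: max_poly_roots nz _ _.
  by apply/allP => v /combs_span; apply: kill.
by rewrite uniq_combs.
Qed.

Lemma lin_kill_span P s : islin P -> (forall x, x \in s -> root P x) ->
  forall v, v \in <<s>>%VS -> root P v.
Proof.
move=> lp kill v; rewrite -[s]/(val (in_tuple s)) => /coord_span ->.
rewrite /root lin_horner_sum // big1 // => i _; rewrite lin_hornerZ //.
by have /eqP -> := kill _ (mem_nth 0 (ltn_ord i)); rewrite scaler0.
Qed.

Definition annP (s : seq L) (P : {poly L}) : Prop :=
  [/\ islin P, size P = (qp (size s)).+1, lead_coef P = 1 &
      forall v, v \in <<s>>%VS -> root P v].

Lemma ann_exists s : free s -> exists P, annP s P.
Proof.
elim: s => [_|w s IH].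
  exists 'X; split; [exact: islinX | by rewrite size_polyX | by rewrite lead_coefX | ].
  by move=> v; rewrite span_nil memv0 => /eqP ->; rewrite rootE hornerX.
rewrite free_cons => /andP[wn fs]; have [A [lA sA lcA kA]] := IH fs.
set a := A.[w].
have anz : a != 0.
  apply/negP => /eqP az.
  have kill : forall v, v \in <<w :: s>>%VS -> root A v.
    apply: lin_kill_span lA _ => x; rewrite inE => /orP[/eqP ->|xs].
      by rewrite /root -/a az.
    by apply: kA; apply: memv_span.
  have Anz : A != 0 by rewrite -size_poly_gt0 sA.
  have := count_roots Anz _ kill; rewrite free_cons wn fs sA /= => /(_ isT).
  by rewrite ltnS /qpow expnS leqNgt ltn_Pmull ?expn_gt0 ?q_gt1 ?(ltnW q_gt1).
pose B : {poly L} := 'X^(qp 1) - (a ^+ q.-1) *: 'X^(qp 0).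
have lB : islin B by apply: islinB; [apply: islinXq | apply: islinZ; apply: islinXq].
have sB : size B = (qp 1).+1.
  rewrite /B size_polyDl ?size_polyXn // size_polyN.
  by rewrite (leq_ltn_trans (size_scale_leq _ _)) // !size_polyXn ltnS ltn_qp.
have lcB : lead_coef B = 1.
  rewrite /B lead_coefDl ?lead_coefXn // size_polyN size_polyXn.
  by rewrite (leq_ltn_trans (size_scale_leq _ _)) // !size_polyXn ltnS ltn_qp.
exists (B \Po A); split.
- exact: islin_comp.
- by rewrite (size_lin_comp sB sA) add1n.
- rewrite (lead_lin_comp sB lA) ?lcB ?lcA ?expr1n ?mulr1 //.
  by rewrite -size_poly_gt0 sA.
move=> v; rewrite -[w :: s]/(val (in_tuple (w :: s))) => /coord_span ->.
rewrite /root horner_comp lin_horner_sum // big_ord_recl /=.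
rewrite big1 ?addr0 => [|i _]; last first.
  rewrite lin_hornerZ //.
  have /eqP -> := kA _ (memv_span (mem_nth 0 (ltn_ord i))); by rewrite scaler0.
rewrite lin_hornerZ // -/a; set c := coord _ _ _.
rewrite /B !hornerE exprZn expF_q -scalerAr -exprSr prednK; last by rewrite ltnW // q_gt1.
by rewrite /qpow expn1 subrr.
Qed.

Lemma rdiv_lin s P h : free s -> annP s P -> islin h ->
  (forall v, v \in <<s>>%VS -> root h v) -> exists2 b, islin b & h = b \Po P.
Proof.
move=> fs [lP sP lcP kP].
move: {2}(size h).+1 (ltnSn (size h)) => N; elim: N h => // N IH h shN lh kh.
have [->|nz] := eqVneq h 0; first by exists 0; rewrite ?comp_poly0 //; apply: islin0.
have [e se] := lin_size lh nz.
have te : (size s <= e)%N.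
  rewrite leqNgt; apply/negP => lt.
  have := count_roots nz fs kh; rewrite se ltnS -/(qp (size s)) leqNgt.
  by rewrite /qpow in lt *; rewrite ltn_exp2l ?q_gt1 // lt.
pose c := lead_coef h; pose M : {poly L} := c *: 'X^(qp (e - size s)).
have cnz : c != 0 by rewrite lead_coef_eq0.
have sM : size M = (qp (e - size s)).+1 by rewrite size_scale // size_polyXn.
have lM : islin M by apply: islinZ; apply: islinXq.
have sMP : size (M \Po P) = (qp e).+1 by rewrite (size_lin_comp sM sP) subnK.
have lcMP : lead_coef (M \Po P) = c.
  rewrite (lead_lin_comp sM lP) ?lcP ?expr1n ?mulr1 ?lead_coefZ ?lead_coefXn ?mulr1 //.
  by rewrite -size_poly_gt0 sP.
have [b lb Eb] : exists2 b, islin b & h - (M \Po P) = b \Po P.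
  apply: IH; last first.
  - move=> v vs; rewrite /root hornerD hornerN horner_comp.
    have /eqP -> := kh v vs; have /eqP -> := kP v vs.
    by rewrite lin_horner0 // subrr.
  - by apply: islinB lh (islin_comp lM lP).
  rewrite ltnS in shN; apply: leq_trans _ shN; rewrite se ltnS.
  apply/leq_sizeP => j; rewrite leq_eqVlt => /orP[/eqP <-|lt].
    rewrite coefB -/c; move: lcMP; rewrite lead_coefE sMP /= => ->.
    by move: (erefl c); rewrite {1}/c lead_coefE se /= => ->; rewrite subrr.
  by rewrite coefB !nth_default ?subrr // ?sMP ?se.
exists (b + M); first by apply: islinD.
by rewrite comp_polyD -Eb subrK.
Qed.


Lemma comb_inj t (w : 'I_t -> L) : free [seq w i | i <- enum 'I_t] ->
  injective (fun c : {ffun 'I_t -> F} => \sum_(i < t) c i *: w i).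
Proof.
move=> fw c c' /= E.
have H := elimT (freeP (X := [tuple w i | i < t])) fw.
apply/ffunP => i.
suff /(_ i) /eqP : forall i, c i - c' i = 0 by rewrite subr_eq0 => /eqP.
apply: H; rewrite (eq_bigr (fun i => c i *: w i - c' i *: w i)) ?sumrB ?E ?subrr //.
by move=> j _; rewrite nth_mktuple scalerBl.
Qed.

Lemma Pi_ann n (g : 'I_n -> L) : free [seq g i | i <- enum 'I_n] ->
  annP [seq g i | i <- enum 'I_n] (Pi_g g).
Proof.
move=> fg; have [P [lP sP lcP kP]] := ann_exists fg.
pose rs := map (fun c : {ffun 'I_n -> F} => \sum_(i < n) c i *: g i)
             (enum {ffun 'I_n -> F}).
have EPi : Pi_g g = \prod_(z <- rs) ('X - z%:P).
  by rewrite /Pi_g big_map big_enum.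
suff -> : Pi_g g = P by [].
rewrite EPi [P](all_roots_prod_XsubC (rs := rs)) ?lcP ?scale1r //.
- by rewrite sP size_map size_enum_ord size_map -cardE card_ffun card_ord.
- apply/allP => z /mapP [c _ ->]; apply: kP; apply: memv_suml => i _.
  by apply: memvZ; apply: memv_span; apply: map_f; apply: mem_enum.
- by rewrite uniq_rootsE map_inj_uniq ?enum_uniq //; apply: comb_inj.
Qed.


Lemma det_moore_neq0 n (g : 'I_n -> L) : free [seq g i | i <- enum 'I_n] ->
  \det (moore n g) != 0.
Proof.
move=> fg; apply/negP => /det0P [v vnz vM].
pose p : {poly L} := \sum_(a < n) v 0 a *: 'X^(qp a).
have lp : islin p by apply: islin_sum => a _; apply: islinZ; apply: islinXq.
have coefp : forall a : 'I_n, p`_(qp a) = v 0 a.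
  move=> a; rewrite /p coef_sum (bigD1 a) //= coefZ coefXn eqxx mulr1 big1 ?addr0 //.
  move=> b /eqP ne; rewrite coefZ coefXn; case: eqP => [/qp_inj E|]; last by rewrite mulr0.
  by case: ne; apply: val_inj.
have pnz : p != 0.
  apply: contra vnz => /eqP p0; apply/eqP/rowP => a.
  by rewrite mxE -coefp p0 coef0.
have kill : forall x, x \in <<[seq g i | i <- enum 'I_n]>>%VS -> root p x.
  apply: lin_kill_span lp _ => x /mapP [l _ ->].
  rewrite /root /p horner_sum.
  apply/eqP; transitivity ((v *m moore n g) 0 l); last by rewrite vM mxE.
  by rewrite mxE; apply: eq_bigr => a _; rewrite hornerZ hornerXn mxE.
have := count_roots pnz fg kill; rewrite size_map size_enum_ord.
rewrite ltnNge; apply/negP; apply/negPn/leq_sizeP => j jn.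
rewrite /p coef_sum big1 // => a _; rewrite coefZ coefXn.
case: eqP => [E|]; last by rewrite mulr0.
by move: jn; rewrite E leqNgt ltn_qp ltn_ord.
Qed.

Lemma det_lin_col m (D : 'M[{poly L}]_m) (j0 : 'I_m) :
  (forall a, islin (D a j0)) ->
  (forall a l, l != j0 -> D a l = ((D a l)`_0)%:P) -> islin (\det D).
Proof.
move=> lc cst; rewrite (expand_det_col _ j0); apply: islin_sum => a _.
set C := row' a (col' j0 D).
have EC : C = map_mx polyC (\matrix_(x, y) (C x y)`_0).
  by apply/matrixP => x y; rewrite !mxE /C; apply: cst; rewrite eq_sym neq_lift.
rewrite /cofactor -/C EC det_map_mx /= -polyCN -polyC_exp -polyCM mulrC mul_polyC.
exact: islinZ.
Qed.

Lemma moore_xE1 n (g : 'I_n -> L) a (l : 'I_n.+1) (H : (val l < n)%N) :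
  moore_x g a l = (g (Ordinal H) ^+ qp a)%:P.
Proof. by rewrite mxE insubT. Qed.

Lemma moore_xE2 n (g : 'I_n -> L) a (l : 'I_n.+1) : val l = n ->
  moore_x g a l = 'X^(qp a).
Proof. by move=> E; rewrite mxE insubN // E ltnn. Qed.

Lemma islin_Lambda n (g r : 'I_n -> L) : islin (Lambda g r).
Proof.
case: n g r => [|n] g r; first by rewrite /Lambda big_ord0; apply: islin0.
apply: islin_sum => i _; rewrite mul_polyC; apply: islinZ.
apply: (det_lin_col (j0 := ord_max)) => a.
  rewrite mxE moore_xE2; first exact: islinXq.
  by rewrite /= /bump -ltnS ltn_ord add1n.
move=> l ne; rewrite mxE.
have H : (val (lift (widen_ord (leqnSn n.+1) i) l) < n.+1)%N.
  rewrite /= /bump; have : (val l < n)%N.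
    by have := ltn_ord l; rewrite ltnS leq_eqVlt => /orP[/eqP E|//]; case/eqP: ne; apply: val_inj.
  by move=> H; apply: (leq_ltn_trans (leq_add (leq_b1 _) (leqnn _))); rewrite add1n ltnS.
by rewrite (moore_xE1 _ _ H) coefC.
Qed.


Lemma sign_lemma n (i : 'I_n) :
  (-1) ^+ (n + i) = - (-1) ^+ (n - i.+1) :> L.
Proof.
have E : n = (n - i.+1 + i.+1)%N by rewrite subnK.
rewrite -signr_odd -[(-1) ^+ (n - i.+1)]signr_odd {1}E -addnA oddD addSn oddS oddD addbb.
by case: (odd (n - i.+1)); rewrite /= ?expr1 ?expr0 ?opprK.
Qed.

Lemma widen_lift n (i : 'I_n) : widen_ord (leqnSn n) i = lift ord_max i.
Proof. by apply: val_inj; rewrite [RHS]lift_max. Qed.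

Lemma Lambda_eval n (g r : 'I_n -> L) (j : 'I_n) :
  free [seq g i | i <- enum 'I_n] -> (Lambda g r).[g j] = r j.
Proof.
move=> fg; set x := g j; set dM := \det (moore n g).
have dMnz : dM != 0 by apply: det_moore_neq0.
pose Mj := map_mx (horner_eval x) (moore_x g).
have MjE1 : forall a (l : 'I_n), Mj a (lift ord_max l) = g l ^+ qp a.
  move=> a l; have H : (nat_of_ord (lift ord_max l) < n)%N by rewrite lift_max.
  rewrite mxE (moore_xE1 _ _ H) horner_evalE hornerC; congr (g _ ^+ _).
  by apply: val_inj; rewrite [RHS]/= -[RHS](lift_max l).
have MjE2 : forall a, Mj a ord_max = x ^+ qp a.
  by move=> a; rewrite mxE moore_xE2 // horner_evalE hornerXn.
pose N0 : 'M[L]_(n.+1) := \matrix_(a, l)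
  if unlift ord_max a is Some a' then Mj a' l
  else (if unlift ord_max l is Some l' then r l' else 0).
have N0E1 : forall a l, N0 (lift ord_max a) l = Mj a l by move=> a l; rewrite mxE liftK.
have N0E2 : forall l, N0 ord_max (lift ord_max l) = r l.
  by move=> l; rewrite mxE unlift_none liftK.
have N0E3 : N0 ord_max ord_max = 0 by rewrite mxE unlift_none.
have stepA : \det N0 = \sum_(i < n) r i *
      ((-1) ^+ (n + i) * \det (col' (lift ord_max i) Mj)).
  rewrite (expand_det_row _ ord_max) big_ord_recr /= N0E3 mul0r addr0.
  apply: eq_bigr => i _; rewrite widen_lift N0E2 /cofactor.
  have -> : row' ord_max (col' (lift ord_max i) N0) = col' (lift ord_max i) Mj :> 'M_n.
    by apply/matrixP => a b; rewrite !mxE liftK mxE [moore_x _ _ _]mxE.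
  by congr (_ * (_ ^+ _ * _)); rewrite [in LHS]lift_max.
have LE : (Lambda g r).[x] = - \det N0 / dM.
  rewrite stepA /Lambda horner_sum -sumrN mulr_suml; apply: eq_bigr => i _.
  rewrite hornerM hornerC -horner_evalE -det_map_mx.
  rewrite (_ : map_mx _ _ = col' (lift ord_max i) Mj); last first.
    by apply/matrixP => a b; rewrite !mxE widen_lift.
  rewrite sign_lemma -/dM.
  ring.
set c1 := lift ord_max j.
have c1n : c1 != ord_max by rewrite eq_sym neq_lift.
pose N1 : 'M[L]_(n.+1) := \matrix_(a, l) N0 a (if l == ord_max then c1 else l).
have dN1 : \det N1 = 0.
  rewrite -det_tr; apply: (determinant_alternate (i1 := ord_max) (i2 := c1)).
    by rewrite eq_sym.
  by move=> b; rewrite !mxE eqxx (negPf c1n).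
have cofE : forall a, cofactor N1 a ord_max = cofactor N0 a ord_max.
  move=> a; rewrite /cofactor; congr (_ * \det _).
  by apply/matrixP => y z; rewrite !mxE eq_sym (negPf (neq_lift _ _)).
have stepB : \det N0 = - r j * dM.
  have -> : \det N0 = \det N0 - \det N1 by rewrite dN1 subr0.
  rewrite [in X in X - _](expand_det_col _ ord_max) (expand_det_col N1 ord_max).
  rewrite -sumrB big_ord_recr /= big1 ?add0r => [|a _]; last first.
    by rewrite cofE -mulrBl [N1 _ _]mxE eqxx widen_lift !N0E1 MjE1 MjE2 subrr mul0r.
  rewrite cofE -mulrBl [N1 _ _]mxE eqxx N0E2 N0E3 add0r.
  rewrite /cofactor -signr_odd addnn odd_double expr0 mul1r.
  have -> : row' ord_max (col' ord_max N0) = moore n g :> 'M_n.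
    by apply/matrixP => a b; rewrite [LHS]mxE [LHS]mxE N0E1 MjE1 mxE.
  by [].
by rewrite LE stepB !mulNr opprK mulrK // unitfE.
Qed.


Lemma rank_dist_dim n (a b : 'I_n -> L) :
  rank_dist a b = \dim <<[seq a j - b j | j <- enum 'I_n]>>%VS.
Proof.
set e := fun j => a j - b j.
set W := <<[seq a j - b j | j <- enum 'I_n]>>%VS.
set t := \dim W; set B := vbasis W; set eb := vbasis (@fullv F L).
have bB := vbasisP W; have fB := basis_free bB.
have BW : forall l : 'I_t, B`_l \in W.
  move=> l; have : B`_l \in <<B>>%VS by apply: memv_span; apply: mem_nth; rewrite size_tuple.
  by rewrite (span_basis bB).
set A := \matrix_(i < \dim (@fullv F L), j < n) coord eb i (a j - b j).
pose BT : 'M[F]_(t, \dim (@fullv F L)) := \matrix_(l, i) coord eb i B`_l.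
have rBT : \rank BT = t.
  apply/eqP; change (row_free BT); rewrite -kermx_eq0; apply/rowV0P => v /sub_kermxP vB0.
  have H := elimT (freeP (X := B)) fB.
  have S0 : \sum_(l < t) v 0 l *: B`_l = 0.
    rewrite [LHS](coord_vbasis (memvf _)) -/eb; apply: big1 => i _.
    have := congr1 (fun M : 'M_(1, _) => M 0 i) vB0; rewrite !mxE => E.
    rewrite linear_sum /=.
    have -> : \sum_(l < t) coord eb i (v 0 l *: B`_l) = 0.
      by apply: (etrans _ E); apply: eq_bigr => l _; rewrite linearZ /= mxE.
    by rewrite scale0r.
  by apply/rowP => l; rewrite mxE; apply: H S0 l.
pose X := [tuple e j | j < n].
have XW : <<X>>%VS = W by [].
pose C : 'M[F]_(n, t) := \matrix_(j, l) coord B l (e j).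
pose D : 'M[F]_(t, n) := \matrix_(l, j) coord X j B`_l.
have EAT : A^T = C *m BT.
  apply/matrixP => j i; rewrite !mxE.
  have ejW : e j \in W by apply: memv_span; apply: map_f; apply: mem_enum.
  rewrite (_ : a j - b j = e j) // {1}(coord_vbasis ejW) linear_sum /=; apply: eq_bigr => l _.
  by rewrite linearZ /= !mxE.
have EBT : BT = D *m A^T.
  apply/matrixP => l i; rewrite !mxE.
  have E := @coord_span _ _ _ X _ (BW l).
  rewrite {1}E linear_sum /=; apply: eq_bigr => j _.
  by rewrite linearZ /= !mxE nth_mktuple.
have h1 : (\rank A^T <= t)%N.
  by have := mxrankM_maxr C BT; rewrite -EAT rBT.
have h2 : (t <= \rank A^T)%N.
  by have := mxrankM_maxr D A^T; rewrite -EBT rBT.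
rewrite /rank_dist -/A -mxrank_tr; apply/eqP; by rewrite eqn_leq h1 h2.
Qed.


Definition hasq p d := size p = (qp d).+1.
Definition qle p d := p = 0 \/ exists2 b, hasq p b & (b <= d)%N.

Lemma hasq_nz p d : hasq p d -> p != 0.
Proof. by rewrite /hasq -size_poly_gt0 => ->. Qed.

Lemma hasq_lead p d : hasq p d -> lead_coef p = p`_(qp d).
Proof. by rewrite lead_coefE => ->. Qed.

Lemma hasq_coef_nz p d : hasq p d -> p`_(qp d) != 0.
Proof. by move=> h; rewrite -(hasq_lead h) lead_coef_eq0 (hasq_nz h). Qed.

Lemma hasq_coef_le p d i : hasq p d -> p`_(qp i) != 0 -> (i <= d)%N.
Proof.
move=> h nz; rewrite -leq_qp -ltnS -h ltnNge; apply/negP => H.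
by move: nz; rewrite nth_default ?eqxx.
Qed.

Lemma hasq_uniq p a b : hasq p a -> hasq p b -> a = b.
Proof. by rewrite /hasq => -> [/qp_inj]. Qed.

Lemma lin_hasq p : islin p -> p != 0 -> exists d, hasq p d.
Proof. exact: lin_size. Qed.

Lemma hasq_comp p u a b : hasq p a -> hasq u b -> hasq (p \Po u) (a + b).
Proof. exact: size_lin_comp. Qed.

Lemma hasqD p u a : hasq p a -> (u = 0 \/ exists2 b, hasq u b & (b < a)%N) ->
  hasq (p + u) a.
Proof.
move=> h [->|[b hb lt]]; first by rewrite addr0.
by rewrite /hasq size_polyDl h // hb ltnS ltn_qp.
Qed.

Lemma qle_hasq p d : hasq p d -> qle p d.
Proof. by move=> h; right; exists d. Qed.

Lemma qle_mono p a b : qle p a -> (a <= b)%N -> qle p b.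
Proof. by move=> [->|[c h le]] ab; [left | right; exists c => //; apply: leq_trans ab]. Qed.

Lemma qleD p u d : islin p -> islin u -> qle p d -> qle u d -> qle (p + u) d.
Proof.
move=> lp lu hp hu; have [z|nz] := eqVneq (p + u) 0; first by left.
have [e he] := lin_hasq (islinD lp lu) nz; right; exists e => //.
rewrite -leq_qp -ltnS -he (leq_trans (size_polyD _ _)) //.
rewrite geq_max; apply/andP; split.
  by case: hp => [->|[b hb le]]; rewrite ?size_poly0 // hb ltnS leq_qp.
by case: hu => [->|[b hb le]]; rewrite ?size_poly0 // hb ltnS leq_qp.
Qed.

Lemma qleN p d : qle p d -> qle (- p) d.
Proof.
case=> [->|[b hb le]]; first by left; rewrite oppr0.
by right; exists b; rewrite // /hasq size_polyN.
Qed.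

Lemma qle_comp p u a b : islin p -> qle p a -> qle u b -> qle (p \Po u) (a + b).
Proof.
move=> lp [->|[c hc lc]] hu; first by left; rewrite comp_poly0.
case: hu => [->|[e he le]]; first by left; apply: lin_comp0.
by right; exists (c + e); [apply: hasq_comp | apply: leq_add].
Qed.

Lemma qle_uniq p d e : hasq p d -> qle p e -> (d <= e)%N.
Proof.
move=> h [z|[b hb le]]; first by have := hasq_nz h; rewrite z eqxx.
by rewrite (hasq_uniq h hb).
Qed.


Lemma lpos1 k (b : pair L) : islin b.1 -> islin b.2 -> lpos k b 1 ->
  exists i, hasq b.1 i /\ (b.2 = 0 \/ exists2 d, hasq b.2 d & (d + (k - 1) < i)%N).
Proof.
move=> l1 l2 [i [c [_ [cnz [ci H]]]]].
have c1 : b.1`_(qp i) != 0 by move: ci; rewrite /coefm /pcomp /= => ->.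
have nz1 : b.1 != 0 by apply: contraNneq c1 => ->; rewrite coef0.
have [d hd] := lin_hasq l1 nz1.
have id : (i <= d)%N := hasq_coef_le hd c1.
have di : d = i.
  have := H d 1%N (or_introl (eqxx _)); rewrite /coefm /pcomp /= => /(_ (hasq_coef_nz hd)).
  case=> [[-> _] //|]; rewrite /mono_lt /wt /= !addn0 ltnn andbF orbF => lt.
  by move: id; rewrite leqNgt lt.
exists i; split; first by rewrite -di.
have [z|nz2] := eqVneq b.2 0; first by left.
right; have [e he] := lin_hasq l2 nz2; exists e => //.
have := H e 2%N (or_intror (eqxx _)); rewrite /coefm /pcomp /= => /(_ (hasq_coef_nz he)).
by case=> [[_ //]|]; rewrite /mono_lt /wt /= addn0 andbF orbF.
Qed.

Lemma lpos2 k (b : pair L) : islin b.1 -> islin b.2 -> lpos k b 2 ->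
  exists i, hasq b.2 i /\ (b.1 = 0 \/ exists2 d, hasq b.1 d & (d <= i + (k - 1))%N).
Proof.
move=> l1 l2 [i [c [_ [cnz [ci H]]]]].
have c1 : b.2`_(qp i) != 0 by move: ci; rewrite /coefm /pcomp /= => ->.
have nz1 : b.2 != 0 by apply: contraNneq c1 => ->; rewrite coef0.
have [d hd] := lin_hasq l2 nz1.
have id : (i <= d)%N := hasq_coef_le hd c1.
have di : d = i.
  have := H d 2%N (or_intror (eqxx _)); rewrite /coefm /pcomp /= => /(_ (hasq_coef_nz hd)).
  case=> [[-> _] //|]; rewrite /mono_lt /wt /= ltn_add2r ltnn andbF orbF => lt.
  by move: id; rewrite leqNgt lt.
exists i; split; first by rewrite -di.
have [z|nz2] := eqVneq b.1 0; first by left.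
right; have [e he] := lin_hasq l1 nz2; exists e => //.
have := H e 1%N (or_introl (eqxx _)); rewrite /coefm /pcomp /= => /(_ (hasq_coef_nz he)).
case=> [[_ //]|]; rewrite /mono_lt /wt /= addn0 andbT => /orP[/ltnW //|/eqP -> //].
Qed.

Lemma wdeg1 k (b : pair L) i l : hasq b.1 i ->
  (b.2 = 0 \/ exists2 d, hasq b.2 d & (d + (k - 1) < i)%N) ->
  wdeg k b = Some l -> l = i.
Proof.
move=> h1 h2; rewrite /wdeg (qdeg_lin h1).
case: h2 => [->|[d hd lt]]; first by rewrite qdeg0 => -[].
rewrite (qdeg_lin hd) => -[<-]; apply/maxn_idPl; exact: ltnW.
Qed.

Lemma wdeg2 k (b : pair L) i l : hasq b.2 i ->
  (b.1 = 0 \/ exists2 d, hasq b.1 d & (d <= i + (k - 1))%N) ->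
  wdeg k b = Some l -> l = (i + (k - 1))%N.
Proof.
move=> h1 h2; rewrite /wdeg (qdeg_lin h1).
case: h2 => [->|[d hd lt]]; first by rewrite qdeg0 => -[].
rewrite (qdeg_lin hd) => -[<-]; apply/maxn_idPr; exact: lt.
Qed.


Definition errsp n (g r : 'I_n -> L) (m : {poly L}) : {vspace L} :=
  <<[seq codeword g m j - r j | j <- enum 'I_n]>>%VS.

Lemma K1 n (g r : 'I_n -> L) (f2 m b0 : {poly L}) d :
  free [seq g i | i <- enum 'I_n] -> islin f2 -> hasq f2 d -> islin m -> islin b0 ->
  b0 \Po Pi_g g = f2 \Po (Lambda g r - m) -> (\dim (errsp g r m) <= d)%N.
Proof.
move=> fg lf hf lm lb E.
have [lPi sPi lcPi kPi] := Pi_ann fg.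
have kill : forall x, x \in [seq codeword g m j - r j | j <- enum 'I_n] -> root f2 x.
  move=> x /mapP [j _ ->]; rewrite /root /codeword.
  have := congr1 (horner^~ (g j)) E; rewrite /= !horner_comp.
  have /eqP -> := kPi _ (memv_span (map_f g (mem_enum _ j))).
  rewrite lin_horner0 // hornerD hornerN Lambda_eval // => /esym H.
  by rewrite -opprB lin_hornerN // H oppr0.
have kW := lin_kill_span lf kill.
set W := errsp g r m; have bB := vbasisP W.
have := count_roots (hasq_nz hf) (basis_free bB).
rewrite (span_basis bB) size_tuple hf => /(_ kW).
by rewrite ltnS /qpow leq_exp2l // q_gt1.
Qed.

Lemma K2 n (g r : 'I_n -> L) (m : {poly L}) :
  free [seq g i | i <- enum 'I_n] -> islin m ->
  exists g0, exists2 b0, [/\ islin g0, hasq g0 (\dim (errsp g r m)) & lead_coef g0 = 1] &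
    islin b0 /\ g0 \Po (Lambda g r - m) = b0 \Po Pi_g g.
Proof.
move=> fg lm; set W := errsp g r m; have bB := vbasisP W.
have [g0 [lg sg lcg kg]] := ann_exists (basis_free bB).
rewrite size_tuple (span_basis bB) in sg kg.
have lh : islin (g0 \Po (Lambda g r - m)).
  by apply: islin_comp lg (islinB (@islin_Lambda _ g r) lm).
have kill : forall x, x \in [seq g i | i <- enum 'I_n] ->
    root (g0 \Po (Lambda g r - m)) x.
  move=> x /mapP [j _ ->]; rewrite /root horner_comp hornerD hornerN Lambda_eval //.
  have : m.[g j] - r j \in W by apply: memv_span; apply: map_f; apply: mem_enum.
  move=> /kg /eqP H; by rewrite -opprB lin_hornerN // H oppr0.
have [b0 lb0 Eb] := rdiv_lin fg (Pi_ann fg) lh (lin_kill_span lh kill).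
by exists g0, b0.
Qed.


Lemma main_thm (n k : nat) (g r : 'I_n -> L) :
  (1 <= k)%N -> (k <= n)%N ->
  free [seq g i | i <- enum 'I_n] ->
  forall b1 b2 : pair L,
  minimal_basis k g r b1 b2 -> lpos k b1 1 -> lpos k b2 2 ->
  forall l1 l2 : nat, wdeg k b1 = Some l1 -> wdeg k b2 = Some l2 ->
  exists J : nat,
    (forall j, (j < J)%N -> forall m, ~ alg_step b1 b2 l1 l2 j m) /\
    (exists m, alg_step b1 b2 l1 l2 J m) /\
    (forall m : {poly L}, alg_step b1 b2 l1 l2 J m <-> closest_msg k g r m).
Proof.
move=> k1 kn fg b1 b2 [HM _] lp1 lp2 l1 l2 wd1 wd2.
have [lPi sPi lcPi kPi] := Pi_ann fg.
have lLam : islin (Lambda g r) := @islin_Lambda n g r.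
have inM1 : forall f, inM g r f -> islin f.2 /\
    exists2 b0, islin b0 & f.1 = b0 \Po Pi_g g - (f.2 \Po Lambda g r).
  move=> f [bb [gg [lbb [lgg ->]]]].
  rewrite /padd /lact /= lin_comp0 // comp_polyXr add0r; split => //.
  by exists bb => //; rewrite lin_compN.
have inM2 : forall f b0, islin f.2 -> islin b0 ->
    f.1 = b0 \Po Pi_g g - (f.2 \Po Lambda g r) -> inM g r f.
  move=> [f1 f2] b0 /= lf2 lb0 ->; exists b0, f2; split; [done|split; [done|]].
  by rewrite /padd /lact /= lin_comp0 // comp_polyXr add0r lin_compN.
have inMb : forall bb gg, islin bb -> islin gg -> inM g r (padd (lact bb b1) (lact gg b2)).
  by move=> bb gg lbb lgg; apply/HM; exists bb, gg.
have lin_of : forall f, inM g r f -> islin f.1 /\ islin f.2.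
  move=> f /inM1 [lf2 [b0 lb0 ->]]; split => //.
  by apply: islinB; apply: islin_comp.
have [lb11 lb12] : islin b1.1 /\ islin b1.2.
  have Eb : padd (lact 'X b1) (lact 0 b2) = b1.
    by case: (b1) => ? ?; rewrite /padd /lact /= !comp_polyX !comp_poly0 !addr0.
  by apply: lin_of; rewrite -Eb; apply: inMb; [exact: islinX | exact: islin0].
have [lb21 lb22] : islin b2.1 /\ islin b2.2.
  have Eb : padd (lact 0 b1) (lact 'X b2) = b2.
    by case: (b2) => ? ?; rewrite /padd /lact /= !comp_polyX !comp_poly0 !add0r.
  by apply: lin_of; rewrite -Eb; apply: inMb; [exact: islin0 | exact: islinX].
have [i1 [h11 h12]] := lpos1 lb11 lb12 lp1.
have El1 := wdeg1 h11 h12 wd1; subst l1.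
have [i2 [h22 h21]] := lpos2 lb21 lb22 lp2.
have El2 := wdeg2 h22 h21 wd2; subst l2.
set E := errsp g r.
have rdE : forall m, rank_dist (codeword g m) r = \dim (E m).
  by move=> m; rewrite rank_dist_dim.
have qlt_iff : forall m, islin m -> qdeg_lt m k <-> qle m (k - 1).
  move=> m lm; have [->|nz] := eqVneq m 0.
    by rewrite /qdeg_lt qdeg0; split => // _; left.
  have [d hd] := lin_hasq lm nz; rewrite /qdeg_lt (qdeg_lin hd); split.
    by move=> lt; right; exists d => //; lia.
  by move=> /(qle_uniq hd) le; lia.
have A : forall j m, alg_step b1 b2 i1 (i2 + (k - 1)) j m ->
    [/\ islin m, qdeg_lt m k & (\dim (E m) <= j + i2)%N].
  move=> j m [lm [bb [gg [lbb [qbb [lgg [mgg [qgg Ef]]]]]]]].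
  have hg : hasq gg j := qdeg_size lgg qgg.
  have hb : bb = 0 \/ exists2 e, hasq bb e & (e + i1 <= j + (i2 + (k - 1)))%N.
    have [->|nzb] := eqVneq bb 0; first by left.
    have [e he] := lin_hasq lbb nzb; right; exists e => //.
    by move: qbb; rewrite /qdeg_le (qdeg_lin he) => H; lia.
  have fM := inMb _ _ lbb lgg.
  set f := padd (lact bb b1) (lact gg b2) in Ef fM.
  have [lf2 [b0 lb0 Ef1]] := inM1 _ fM.
  have hf2 : hasq f.2 (j + i2).
    rewrite /= addrC; apply: hasqD; first exact: hasq_comp hg h22.
    case: hb => [->|[e he le]]; first by left; rewrite comp_poly0.
    case: h12 => [->|[d hd lt]]; first by left; apply: lin_comp0.
    by right; exists (e + d); [exact: hasq_comp | lia].
  have qf1 : qle f.1 (j + (i2 + (k - 1))).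
    rewrite /=; apply: qleD; try by apply: islin_comp.
      case: hb => [->|[e he le]]; first by left; rewrite comp_poly0.
      by apply: (qle_mono (qle_comp lbb (qle_hasq he) (qle_hasq h11))).
    exact: qle_comp lgg (qle_hasq hg) h21.
  split => //.
    apply/(qlt_iff _ lm); have [->|nzm] := eqVneq m 0; first by left.
    have [dm hm] := lin_hasq lm nzm; right; exists dm => //.
    have h1 : hasq f.1 (j + i2 + dm) by rewrite Ef /hasq size_polyN; apply: hasq_comp.
    by have := qle_uniq h1 qf1; lia.
  apply: (K1 fg lf2 hf2 lm lb0).
  have -> : b0 \Po Pi_g g = f.1 + (f.2 \Po Lambda g r) by rewrite Ef1 subrK.
  by rewrite Ef lin_compB // addrC.
have B : forall m, islin m -> qdeg_lt m k -> (i2 <= \dim (E m))%N /\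
    alg_step b1 b2 i1 (i2 + (k - 1)) (\dim (E m) - i2) m.
  move=> m lm /(qlt_iff _ lm) qm.
  set t := \dim (E m).
  have [g0 [b0 [lg0 hg0 lcg0] [lb0 Eg0]]] := K2 r fg lm.
  rewrite -/(E m) -/t in hg0.
  pose f : pair L := (- (g0 \Po m), g0).
  have fM : inM g r f.
    apply: (inM2 f b0) => //=.
    by rewrite -Eg0 lin_compB // addrAC subrr add0r.
  have [bb [gg [lbb [lgg Ef]]]] := iffLR (HM f) fM.
  have E1 : - (g0 \Po m) = (bb \Po b1.1) + (gg \Po b2.1) := congr1 fst Ef.
  have E2 : g0 = (bb \Po b1.2) + (gg \Po b2.2) := congr1 snd Ef.
  have qg0m : qle (- (g0 \Po m)) (t + (k - 1)).
    exact: qleN (qle_comp lg0 (qle_hasq hg0) qm).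
  have key : exists2 c, hasq gg c & (t = c + i2)%N /\
      (bb = 0 \/ exists2 e, hasq bb e & (e + i1 <= c + (i2 + (k - 1)))%N).
    have [zb|nzb] := eqVneq bb 0.
      have [zg|nzg] := eqVneq gg 0.
        by move: (hasq_nz hg0); rewrite E2 zb zg !comp_poly0 addr0 eqxx.
      have [c hc] := lin_hasq lgg nzg; exists c => //; split; last by left.
      have : hasq g0 (c + i2) by rewrite E2 zb comp_poly0 add0r; apply: hasq_comp.
      by move/(hasq_uniq hg0).
    have [e he] := lin_hasq lbb nzb.
    have [zg|nzg] := eqVneq gg 0.
      exfalso; rewrite zg !comp_poly0 !addr0 in E1 E2.
      have h1 : hasq (- (g0 \Po m)) (e + i1) by rewrite E1; apply: hasq_comp.
      have := qle_uniq h1 qg0m.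
      case: h12 => [z|[d hd lt]]; first by move: (hasq_nz hg0); rewrite E2 z lin_comp0 ?eqxx.
      have : hasq g0 (e + d) by rewrite E2; apply: hasq_comp.
      by move/(hasq_uniq hg0) => ->; lia.
    have [c hc] := lin_hasq lgg nzg; exists c => //.
    case: (leqP (e + i1) (c + (i2 + (k - 1)))) => le.
      split; last by right; exists e.
      have : hasq g0 (c + i2).
        rewrite E2 addrC; apply: hasqD; first exact: hasq_comp hc h22.
        case: h12 => [->|[d hd lt]]; first by left; apply: lin_comp0.
        by right; exists (e + d); [exact: hasq_comp | lia].
      by move/(hasq_uniq hg0).
    exfalso.
    have h1 : hasq (- (g0 \Po m)) (e + i1).
      rewrite E1; apply: hasqD; first exact: hasq_comp he h11.
      case: h21 => [->|[d hd le']]; first by left; apply: lin_comp0.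
      by right; exists (c + d); [exact: hasq_comp | lia].
    have := qle_uniq h1 qg0m.
    case: h12 => [z|[d hd lt]].
      have : hasq g0 (c + i2) by rewrite E2 z lin_comp0 // add0r; apply: hasq_comp.
      by move/(hasq_uniq hg0) => ->; lia.
    have : qle g0 (maxn (c + i2) (e + d)).
      rewrite E2; apply: qleD; try by apply: islin_comp.
        by apply: (qle_mono (qle_hasq (hasq_comp he hd))); apply: leq_maxr.
      by apply: (qle_mono (qle_hasq (hasq_comp hc h22))); apply: leq_maxl.
    by move/(qle_uniq hg0); lia.
  have [c hc [tc hbb]] := key.
  split; first lia.
  rewrite (_ : (t - i2)%N = c); last lia.
  set lc := lead_coef gg.
  have lcnz : lc != 0 by rewrite lead_coef_eq0 (hasq_nz hc).
  have hc' : hasq (lc^-1 *: gg) c by rewrite /hasq size_scale ?invr_eq0.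
  split => //; exists (lc^-1 *: bb), (lc^-1 *: gg).
  split; first exact: islinZ.
  split.
    case: hbb => [->|[e he le]]; first by rewrite scaler0 /qdeg_le qdeg0.
    have he' : hasq (lc^-1 *: bb) e by rewrite /hasq size_scale ?invr_eq0.
    by rewrite /qdeg_le (qdeg_lin he'); lia.
  split; first exact: islinZ.
  split.
    exists c; split; first exact: qdeg_lin.
    by rewrite coefZ -(hasq_lead hc) mulVf.
  split; first exact: qdeg_lin.
  by rewrite /= !comp_polyZ -!scalerDr -E1 -E2 comp_polyZ scalerN.
have exmin : exists2 m0, islin m0 /\ qdeg_lt m0 k &
    forall m, islin m -> qdeg_lt m k -> (\dim (E m0) <= \dim (E m))%N.
  suff : forall N, (exists2 m, islin m /\ qdeg_lt m k & (\dim (E m) <= N)%N) ->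
      exists2 m0, islin m0 /\ qdeg_lt m0 k &
        forall m, islin m -> qdeg_lt m k -> (\dim (E m0) <= \dim (E m))%N.
    apply; exists 0 => //; split; first exact: islin0.
    by rewrite /qdeg_lt qdeg0.
  elim=> [|N IH] [m cm le].
    by exists m => // m' _ _; lia.
  case: (classic (exists2 m, islin m /\ qdeg_lt m k & (\dim (E m) <= N)%N)) => [PN|nPN].
    exact: IH.
  exists m => // m' lm' qm'; rewrite leqNgt; apply/negP => lt.
  by apply: nPN; exists m' => //; lia.
have [m0 [lm0 qm0] min0] := exmin.
have [i2t st0] := B m0 lm0 qm0.
exists (\dim (E m0) - i2)%N; split; last split.
- move=> j lt m st; have [lm qm le] := A j m st.
  by have := min0 m lm qm; lia.
- by exists m0.
move=> m; split.
  move=> st; have [lm qm le] := A _ _ st; split => //; split => // m' lm' qm'.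
  by rewrite !rdE; have := min0 m' lm' qm'; lia.
move=> [lm [qm cl]]; have := cl m0 lm0 qm0; rewrite !rdE => le.
have := min0 m lm qm => ge.
have -> : (\dim (E m0) - i2)%N = (\dim (E m) - i2)%N by lia.
by have [_ st] := B m lm qm.
Qed.

End G.

Unset Implicit Arguments.

Theorem theorem23 (F : finFieldType) (L : fieldExtType F) (n k : nat)
    (g r : 'I_n -> L) :
  (1 <= k)%N -> (k <= n)%N ->
  free [seq g i | i <- enum 'I_n] ->
  forall b1 b2 : pair L,
  minimal_basis k g r b1 b2 -> lpos k b1 1 -> lpos k b2 2 ->
  forall l1 l2 : nat, wdeg k b1 = Some l1 -> wdeg k b2 = Some l2 ->
  exists J : nat,
    (forall j, (j < J)%N -> forall m, ~ alg_step b1 b2 l1 l2 j m) /\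
    (exists m, alg_step b1 b2 l1 l2 J m) /\
    (forall m : {poly L}, alg_step b1 b2 l1 l2 J m <-> closest_msg k g r m).
Proof. exact: main_thm. Qed.
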